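(* Let $R$ be a unital associative ring and $n\ge1$. Let $\Phi$ and $\Phi^{-1}$ be as defined below and let $\Psi=J_2\circ\Phi\circ J_2$. Then $\Psi$ and $\Phi^{-1}$ have the same domain, each maps this domain bijectively onto ${\rm dom}(\Phi)$, and $\Phi^{-1}(A)\sim\Psi(A)$ for every $A\in{\rm dom}(\Psi)={\rm dom}(\Phi^{-1})$.
   Context: $R^*$: units of $R$. $M_n^*(R)$: invertible $n\times n$ matrices; $M_n^\star(R)$: matrices with all entries in $R^*$. $J_1(M)=M^{-1}$ on $M_n^*(R)$; $J_2(M)_{jk}=(M_{kj})^{-1}$ on $M_n^\star(R)$; $J=J_2\circ J_1$, $J^{-1}=J_1\circ J_2$, where $g\circ f$ has domain $\{x\in{\rm dom}(f):f(x)\in{\rm dom}(g)\}$. $\widehat M_n(R)$: matrices whose first row and column consist of $1$'s. For $A=\{a_{j,k}\}\in M_n^\star(R)$: $\Lambda^L(A)_{j,k}=a_{1,1}a_{j,1}^{-1}a_{j,k}a_{1,k}^{-1}$, $\Lambda^R(A)_{j,k}=a_{j,1}^{-1}a_{j,k}a_{1,k}^{-1}a_{1,1}$. $\Phi(A)=J_2(\Lambda^L(A^{-1}))$ with ${\rm dom}(\Phi)={\rm dom}(J)\cap\widehat M_n(R)\cap M_n^\star(R)$; $\Phi^{-1}(A)=\Lambda^R(J^{-1}(A))$ with domain $\widehat M_n(R)\cap\{M\in{\rm dom}(J^{-1}):J^{-1}(M)\in M_n^\star(R)\}$ (this is the inverse map of $\Phi$). $A\sim B$ means $B=D_1^{-1}AD_2$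 for invertible diagonal $D_1,D_2$. *)

(* Defs.v *)
From HB Require Import structures.
From mathcomp Require Import all_boot all_order all_algebra.
From Stdlib Require Import ClassicalEpsilon.
Set Implicit Arguments. Unset Strict Implicit. Unset Printing Implicit Defensive.
Import GRing.Theory.
Local Open Scope ring_scope.

Section Defs.
Variables (R : unitRingType) (n : nat).
(* Square matrices of size n.+1 (i.e. any size >= 1); index ord0 is "1". *)
Notation M := 'M[R]_n.+1.

Definition is_inverse (A B : M) : Prop := A *m B = 1%:M /\ B *m A = 1%:M.

Definition invertible (A : M) : Prop := exists B, is_inverse A B.

Definition starb (A : M) : bool := [forall j, forall k, A j k \is a GRing.unit].

Definition hatb (A : M) : bool := [forall j, (A ord0 j == 1) && (A j ord0 == 1)].

(* Partial maps are option-valued; domain = where the value is Some. *)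
Definition J1 (A : M) : option M :=
  match excluded_middle_informative (invertible A) with
  | left H => Some (proj1_sig (constructive_indefinite_description _ H))
  | right _ => None
  end.

Definition J2 (A : M) : option M :=
  if starb A then Some (\matrix_(j, k) (A k j)^-1) else None.

Definition pcomp (g f : M -> option M) (A : M) : option M :=
  match f A with Some B => g B | None => None end.

Definition J := pcomp J2 J1.
Definition Jinv := pcomp J1 J2.

Definition LamL (A : M) : option M :=
  if starb A then
    Some (\matrix_(j, k) (A ord0 ord0 * (A j ord0)^-1 * A j k * (A ord0 k)^-1))
  else None.

Definition LamR (A : M) : option M :=
  if starb A then
    Some (\matrix_(j, k) ((A j ord0)^-1 * A j k * (A ord0 k)^-1 * A ord0 ord0))
  else None.

Definition Phi (A : M) : option M :=
  if hatb A && starb A then pcomp J2 (pcomp LamL J1) A else None.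

Definition Phiinv (A : M) : option M :=
  if hatb A then pcomp LamR Jinv A else None.

Definition Psi := pcomp J2 (pcomp Phi J2).

Definition dom (f : M -> option M) (A : M) : Prop := exists B, f A = Some B.

Definition bij_onto (f g : M -> option M) : Prop :=
  [/\ (forall A B, f A = Some B -> dom g B),
      (forall A1 A2 B, f A1 = Some B -> f A2 = Some B -> A1 = A2)
    & (forall B, dom g B -> exists A, f A = Some B)].

Definition is_diag (D : M) : Prop := forall i j, i != j -> D i j = 0.

Definition msim (A B : M) : Prop :=
  exists D1 D1' D2, [/\ is_diag D1, is_diag D2, is_inverse D1 D1',
                        invertible D2 & B = D1' *m A *m D2].
End Defs.

(* Main.v *)
Require Import Defs.
From mathcomp Require Import all_boot all_order all_algebra.
From Stdlib Require Import ClassicalEpsilon.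
Set Implicit Arguments. Unset Strict Implicit. Unset Printing Implicit Defensive.
Import GRing.Theory.
Local Open Scope ring_scope.

Section Aux.
Variables (R : unitRingType) (n : nat).
Notation M := 'M[R]_n.+1.
Notation o := (@ord0 n).

Definition sc (u v : 'I_n.+1 -> R) (C : M) : M := \matrix_(j, k) (u j * C j k * v k).
Definition cj (u : R) (C : M) : M := \matrix_(j, k) (u * C j k * u^-1).
Definition J2m (A : M) : M := \matrix_(j, k) (A k j)^-1.
Definition LamLm (A : M) : M :=
  \matrix_(j, k) (A ord0 ord0 * (A j ord0)^-1 * A j k * (A ord0 k)^-1).
Definition LamRm (A : M) : M :=
  \matrix_(j, k) ((A j ord0)^-1 * A j k * (A ord0 k)^-1 * A ord0 ord0).

Lemma starP (A : M) : reflect (forall j k, A j k \is a GRing.unit) (starb A).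
Proof.
apply: (iffP forallP) => [H j k|H j]; first by move/forallP: (H j).
by apply/forallP.
Qed.

Lemma hatP (A : M) : reflect (forall j, A ord0 j = 1 /\ A j ord0 = 1) (hatb A).
Proof.
apply: (iffP forallP) => [H j|H j]; first by case/andP: (H j) => /eqP -> /eqP ->.
by case: (H j) => -> ->; rewrite !eqxx.
Qed.

Lemma inv_uniq (A B B' : M) : is_inverse A B -> is_inverse A B' -> B = B'.
Proof.
case=> h1 h2 [h3 h4].
by rewrite -[B]mulmx1 -h3 mulmxA h2 mul1mx.
Qed.

Lemma J1_some (A B : M) : is_inverse A B -> J1 A = Some B.
Proof.
move=> h; rewrite /J1; case: excluded_middle_informative => [H|H].
  congr Some; apply: inv_uniq (h).
  exact: (proj2_sig (constructive_indefinite_description _ H)).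
by case: H; exists B.
Qed.

Lemma J1_inv (A B : M) : J1 A = Some B -> is_inverse A B.
Proof.
rewrite /J1; case: excluded_middle_informative => [H|//] [<-].
exact: (proj2_sig (constructive_indefinite_description _ H)).
Qed.

Lemma sc_inv (C D : M) (u v : 'I_n.+1 -> R) :
  (forall j, u j \is a GRing.unit) -> (forall j, v j \is a GRing.unit) ->
  is_inverse C D ->
  is_inverse (sc u v C) (sc (fun j => (v j)^-1) (fun k => (u k)^-1) D).
Proof.
move=> hu hv [h1 h2]; split; apply/matrixP => j k; rewrite !mxE.
  transitivity (u j * (\sum_l C j l * D l k) * (u k)^-1).
    rewrite mulr_sumr mulr_suml; apply: eq_bigr => l _; rewrite !mxE.
    by rewrite !mulrA (mulrK (hv l)) -!mulrA.
  have -> : \sum_l C j l * D l k = (C *m D) j k by rewrite !mxE.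
  rewrite h1 !mxE; case: eqP => [->|_]; first by rewrite mulr1n mulr1 divrr.
  by rewrite mulr0n mulr0 mul0r.
transitivity ((v j)^-1 * (\sum_l D j l * C l k) * v k).
  rewrite mulr_sumr mulr_suml; apply: eq_bigr => l _; rewrite !mxE.
  by rewrite !mulrA (mulrVK (hu l)) -!mulrA.
have -> : \sum_l D j l * C l k = (D *m C) j k by rewrite !mxE.
rewrite h2 !mxE; case: eqP => [->|_]; first by rewrite mulr1n mulr1 mulVr.
by rewrite mulr0n mulr0 mul0r.
Qed.


Lemma LamL_sc (u v : 'I_n.+1 -> R) (B : M) :
  (forall j, u j \is a GRing.unit) -> (forall j, v j \is a GRing.unit) ->
  (forall j, B o j = 1 /\ B j o = 1) -> LamLm (sc u v B) = cj (u o) B.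
Proof.
move=> hu hv hB; apply/matrixP => j k; rewrite !mxE.
have [-> _] := hB k; have [_ ->] := hB j; have [-> _] := hB o.
rewrite !mulr1 !invrM // !mulrA (mulrK (hv o)) (mulrVK (hu j)).
by rewrite -(mulrA _ (v k)) (divrr (hv k)) mulr1.
Qed.

Lemma LamR_sc (u v : 'I_n.+1 -> R) (B : M) :
  (forall j, u j \is a GRing.unit) -> (forall j, v j \is a GRing.unit) ->
  (forall j, B o j = 1 /\ B j o = 1) -> LamRm (sc u v B) = cj (v o)^-1 B.
Proof.
move=> hu hv hB; apply/matrixP => j k; rewrite !mxE invrK.
have [-> _] := hB k; have [_ ->] := hB j; have [-> _] := hB o.
rewrite !mulr1 !invrM // !mulrA (mulrVK (hu j)) (mulrK (hv k)) (mulrVK (hu o)).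
by [].
Qed.

Lemma LamL_cj (C : M) : C o o \is a GRing.unit ->
  LamLm C = cj (C o o) (LamRm C).
Proof.
move=> h; apply/matrixP => j k; rewrite !mxE.
by rewrite !mulrA (mulrK h).
Qed.

Lemma cj1 (X : M) : cj 1 X = X.
Proof. by apply/matrixP => j k; rewrite !mxE invr1 mulr1 mul1r. Qed.

Lemma cjK (u : R) (X : M) : u \is a GRing.unit -> cj u (cj u^-1 X) = X.
Proof.
move=> h; apply/matrixP => j k; rewrite !mxE invrK.
by rewrite !mulrA (divrr h) mul1r (mulrK h).
Qed.

Lemma cjVK (u : R) (X : M) : u \is a GRing.unit -> cj u^-1 (cj u X) = X.
Proof.
move=> h; apply/matrixP => j k; rewrite !mxE invrK.
by rewrite !mulrA (mulVr h) mul1r (mulrVK h).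
Qed.

Lemma J2mK (A : M) : starb A -> J2m (J2m A) = A.
Proof. by move=> _; apply/matrixP => j k; rewrite !mxE invrK. Qed.

Lemma star_J2m (A : M) : starb A -> starb (J2m A).
Proof. by move/starP=> h; apply/starP => j k; rewrite !mxE unitrV. Qed.

Lemma star_sc (u v : 'I_n.+1 -> R) (B : M) :
  (forall j, u j \is a GRing.unit) -> (forall j, v j \is a GRing.unit) ->
  starb B -> starb (sc u v B).
Proof.
move=> hu hv /starP h; apply/starP => j k; rewrite !mxE.
by rewrite unitrMl // unitrMr.
Qed.

Lemma cj_sc (u : R) (X : M) : cj u X = sc (fun _ => u) (fun _ => u^-1) X.
Proof. by []. Qed.

Definition GoodPhi (X Y : M) := [/\ hatb X, starb X, is_inverse X Y & starb Y].
Definition Good (A C : M) := [/\ hatb A, starb A, is_inverse (J2m A) C & starb C].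

Lemma cj_good (u : R) (X Y : M) : u \is a GRing.unit -> GoodPhi X Y ->
  GoodPhi (cj u X) (cj u Y).
Proof.
move=> hu [/hatP hX sX iXY sY]; have hV : u^-1 \is a GRing.unit by rewrite unitrV.
split.
- apply/hatP => j; rewrite !mxE; have [-> ->] := hX j.
  by rewrite mulr1 divrr.
- by rewrite cj_sc; apply: star_sc.
- have := sc_inv (fun _ => hu) (fun _ => hV) iXY.
  by rewrite invrK.
- by rewrite cj_sc; apply: star_sc.
Qed.


Lemma LamL_eq (C : M) :
  LamLm C = sc (fun j => C o o * (C j o)^-1) (fun k => (C o k)^-1) C.
Proof. by apply/matrixP => j k; rewrite !mxE. Qed.

Lemma LamR_eq (C : M) :
  LamRm C = sc (fun j => (C j o)^-1) (fun k => (C o k)^-1 * C o o) C.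
Proof. by apply/matrixP => j k; rewrite !mxE !mulrA. Qed.

Lemma star_LamL (C : M) : starb C -> starb (LamLm C).
Proof.
move=> s; have /starP h := s; rewrite LamL_eq; apply: star_sc => // j.
  by rewrite unitrMr // unitrV.
by rewrite unitrV.
Qed.

Lemma star_LamR (C : M) : starb C -> starb (LamRm C).
Proof.
move=> s; have /starP h := s; rewrite LamR_eq; apply: star_sc => // j.
  by rewrite unitrV.
by rewrite unitrMl // unitrV.
Qed.

Lemma hat_J2m (A : M) : hatb A -> hatb (J2m A).
Proof.
move/hatP=> h; apply/hatP => j; rewrite !mxE.
by have [-> ->] := h j; rewrite invr1.
Qed.

Lemma hat_J2m_inv (A : M) : hatb (J2m A) -> hatb A.
Proof.
move/hatP=> h; apply/hatP => j; have [h1 h2] := h j; move: h1 h2.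
by rewrite !mxE => h1 h2; rewrite -[A o j]invrK -[A j o]invrK h1 h2 invr1.
Qed.

Lemma Phiinv_some (A C : M) : Good A C -> Phiinv A = Some (LamRm C).
Proof.
case=> hA sA iAC sC.
by rewrite /Phiinv hA /Defs.pcomp /Jinv /Defs.pcomp /J2 sA -/(J2m A) (J1_some iAC) /LamR sC.
Qed.

Lemma Phiinv_spec (A Q : M) : Phiinv A = Some Q -> exists C, Good A C /\ Q = LamRm C.
Proof.
rewrite /Phiinv; case hA: (hatb A) => //.
rewrite /Defs.pcomp /Jinv /Defs.pcomp /J2; case sA: (starb A) => //.
rewrite -/(J2m A); case e: (J1 (J2m A)) => [C|] //.
rewrite /LamR; case sC: (starb C) => //; case=> <-.
by exists C; split => //; split => //; apply: J1_inv.
Qed.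

Lemma Phi_some (X Y : M) : GoodPhi X Y -> Phi X = Some (J2m (LamLm Y)).
Proof.
case=> hX sX iXY sY.
rewrite /Phi hX sX /Defs.pcomp (J1_some iXY) /LamL sY -/(LamLm Y) /J2.
by rewrite star_LamL.
Qed.

Lemma Phi_spec (X Z : M) : Phi X = Some Z -> exists Y, GoodPhi X Y /\ Z = J2m (LamLm Y).
Proof.
rewrite /Phi; case hX: (hatb X) => //; case sX: (starb X) => //=.
rewrite /Defs.pcomp; case e: (J1 X) => [Y|] //.
rewrite /LamL; case sY: (starb Y) => //.
rewrite -/(LamLm Y) /J2 star_LamL // => -[<-].
by exists Y; split => //; split => //; apply: J1_inv.
Qed.

Lemma Psi_some (A C : M) : Good A C -> Psi A = Some (LamLm C).
Proof.
move=> G; have [hA sA iAC sC] := G.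
rewrite /Psi /Defs.pcomp {1}/J2 sA -/(J2m A).
rewrite (Phi_some (Y := C)); last by split => //; [apply: hat_J2m | apply: star_J2m].
by rewrite /J2 star_J2m ?star_LamL // -/(J2m (J2m (LamLm C))) J2mK // star_LamL.
Qed.

Lemma Psi_spec (A P : M) : Psi A = Some P -> exists C, Good A C /\ P = LamLm C.
Proof.
rewrite /Psi /Defs.pcomp {1}/J2; case sA: (starb A) => //.
rewrite -/(J2m A); case e: (Phi (J2m A)) => [Z|] //.
have [C [[hB _ iC sC] ->]] := Phi_spec e.
rewrite /J2 star_J2m ?star_LamL // -/(J2m (J2m (LamLm C))) J2mK ?star_LamL // => -[<-].
exists C; split => //; split => //; exact: hat_J2m_inv.
Qed.


Lemma inv_sym (A B : M) : is_inverse A B -> is_inverse B A.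
Proof. by case. Qed.

Lemma hat_LamL (Y : M) : starb Y -> hatb (LamLm Y).
Proof.
move/starP=> h; apply/hatP => j; rewrite !mxE; split.
  by rewrite (divrr (h _ _)) mul1r divrr.
by rewrite (mulrVK (h _ _)) divrr.
Qed.

Lemma hat_LamR (C : M) : starb C -> hatb (LamRm C).
Proof.
move/starP=> h; apply/hatP => j; rewrite !mxE; split.
  by rewrite (mulrK (h _ _)) mulVr.
by rewrite (mulVr (h _ _)) mul1r mulVr.
Qed.

Definition Yq (A C : M) : M :=
  sc (fun j => ((C o j)^-1 * C o o)^-1) (fun k => ((C k o)^-1)^-1) (J2m A).

Lemma g_lemma (A C : M) : Good A C ->
  [/\ GoodPhi (LamRm C) (Yq A C), J2m (LamLm (Yq A C)) = A & (Yq A C) o o = C o o].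
Proof.
case=> hA sA iAC sC; have /starP hC := sC.
have hu : forall j, (C j o)^-1 \is a GRing.unit by move=> j; rewrite unitrV.
have hv : forall j, (C o j)^-1 * C o o \is a GRing.unit.
  by move=> j; rewrite unitrMl // unitrV.
have hu' : forall j, ((C o j)^-1 * C o o)^-1 \is a GRing.unit.
  by move=> j; rewrite unitrV.
have hv' : forall j, ((C j o)^-1)^-1 \is a GRing.unit by move=> j; rewrite unitrV.
have hJ := hat_J2m hA; have /hatP hJ' := hJ.
split.
- split; [exact: hat_LamR | exact: star_LamR | | ].
    rewrite LamR_eq; exact: (sc_inv hu hv (inv_sym iAC)).
  by apply: star_sc => //; apply: star_J2m.
- rewrite /Yq LamL_sc // mulVr // invr1 cj1 J2mK //.
- rewrite /Yq !mxE mulVr // invr1 mul1r invrK.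
  have /hatP/(_ o) [-> _] := hA. have e : (1:R)^-1 = 1 := invr1 R. by rewrite e mul1r.
Qed.

Definition Wq (X Y : M) : M :=
  sc (fun j => ((Y o j)^-1)^-1) (fun k => (Y o o * (Y k o)^-1)^-1) X.

Lemma h_lemma (X Y : M) : GoodPhi X Y ->
  Good (J2m (LamLm Y)) (Wq X Y) /\ LamRm (Wq X Y) = X.
Proof.
case=> hX sX iXY sY; have /starP hY := sY.
have hu : forall j, Y o o * (Y j o)^-1 \is a GRing.unit.
  by move=> j; rewrite unitrMr // unitrV.
have hv : forall j, (Y o j)^-1 \is a GRing.unit by move=> j; rewrite unitrV.
have hu' : forall j, (Y o o * (Y j o)^-1)^-1 \is a GRing.unit.
  by move=> j; rewrite unitrV.
have hv' : forall j, ((Y o j)^-1)^-1 \is a GRing.unit by move=> j; rewrite unitrV.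
split.
- split.
  + by apply: hat_J2m; apply: hat_LamL.
  + by apply: star_J2m; apply: star_LamL.
  + rewrite J2mK ?star_LamL // LamL_eq; exact: (sc_inv hu hv (inv_sym iXY)).
  + exact: star_sc.
- have /hatP hX' := hX.
  by rewrite /Wq LamR_sc // invrK divrr // cj1.
Qed.


Lemma Phiinv_Phi (A Q : M) : Phiinv A = Some Q -> Phi Q = Some A.
Proof.
case/Phiinv_spec => C [G ->]; have [g1 g2 _] := g_lemma G.
by rewrite (Phi_some g1) g2.
Qed.

Lemma Phiinv_inj (A1 A2 Q : M) : Phiinv A1 = Some Q -> Phiinv A2 = Some Q -> A1 = A2.
Proof.
by move=> /Phiinv_Phi h1 /Phiinv_Phi; rewrite h1 => -[].
Qed.

Lemma mulmx_scalar_entry (A : M) (d : R) j k : (A *m d%:M) j k = A j k * d.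
Proof.
rewrite mxE (bigD1 k) //= mxE eqxx mulr1n big1 ?addr0 // => l /negbTE hl.
by rewrite mxE hl mulr0n mulr0.
Qed.

Lemma scalar_diag (a : R) : is_diag (a%:M : M).
Proof. by move=> i j /negbTE h; rewrite mxE h mulr0n. Qed.

Lemma scalar_inv (a : R) : a \is a GRing.unit -> is_inverse (a%:M : M) (a^-1)%:M.
Proof. by move=> h; split; rewrite -scalar_mxM ?divrr ?mulVr. Qed.

End Aux.

Theorem proposition4 (R : unitRingType) (n : nat) :
  (forall A : 'M[R]_n.+1, dom (@Psi R n) A <-> dom (@Phiinv R n) A) /\
  bij_onto (@Psi R n) (@Phi R n) /\
  bij_onto (@Phiinv R n) (@Phi R n) /\
  (forall (A P Q : 'M[R]_n.+1),
      Phiinv A = Some Q -> Psi A = Some P -> msim Q P).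
Proof.
have cunit : forall A C : 'M[R]_n.+1, Good A C -> C ord0 ord0 \is a GRing.unit.
  by move=> A C [_ _ _ /starP].
split; [|split; [|split]].
- move=> A; split.
    by case=> P /Psi_spec [C [G _]]; exists (LamRm C); apply: Phiinv_some.
  by case=> Q /Phiinv_spec [C [G _]]; exists (LamLm C); apply: Psi_some.
- split.
  + move=> A P /Psi_spec [C [G ->]]; have [g1 _ _] := g_lemma G.
    rewrite LamL_cj ?(cunit _ _ G) //.
    exists (J2m (LamLm (cj (C ord0 ord0) (Yq A C)))).
    by apply: Phi_some; apply: cj_good => //; apply: cunit G.
  + move=> A1 A2 P /Psi_spec [C1 [G1 ->]] /Psi_spec [C2 [G2 e]].
    have u1 := cunit _ _ G1; have u2 := cunit _ _ G2.
    have [g1 _ y1] := g_lemma G1; have [g2 _ y2] := g_lemma G2.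
    have k1 := cj_good u1 g1; have k2 := cj_good u2 g2.
    rewrite -LamL_cj // in k1; rewrite -LamL_cj // -e in k2.
    have [_ _ i1 _] := k1; have [_ _ i2 _] := k2.
    have ec := inv_uniq i1 i2.
    have ec' : C1 ord0 ord0 = C2 ord0 ord0.
      move/matrixP/(_ ord0 ord0): ec; rewrite mxE y1 mxE y2.
      by rewrite (mulrK u1) (mulrK u2).
    have eQ : LamRm C1 = LamRm C2.
      by rewrite -(cjVK (LamRm C1) u1) -LamL_cj // e LamL_cj // ec' cjVK.
    apply: (@Phiinv_inj _ _ _ _ (LamRm C1)); first exact: Phiinv_some.
    by rewrite eQ; apply: Phiinv_some.
  + move=> P [Z /Phi_spec [Y [GP _]]].
    have [_ _ _ /starP sY] := GP; have u := sY ord0 ord0.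
    have uV : (Y ord0 ord0)^-1 \is a GRing.unit by rewrite unitrV.
    have GQ := cj_good uV GP.
    have [G eW] := h_lemma GQ.
    exists (J2m (LamLm (cj (Y ord0 ord0)^-1 Y))).
    rewrite (Psi_some G) LamL_cj ?(cunit _ _ G) // eW.
    have [g1 _ y1] := g_lemma G; rewrite eW in g1.
    have [_ _ i1 _] := g1; have [_ _ i2 _] := GQ.
    have := inv_uniq i1 i2; move/matrixP/(_ ord0 ord0); rewrite y1 !mxE invrK.
    by rewrite (mulVr u) mul1r => ->; rewrite invrK cjK.
- split.
  + by move=> A Q /Phiinv_Phi h; exists A.
  + by move=> A1 A2 Q; apply: Phiinv_inj.
  + move=> X [Z /Phi_spec [Y [GP _]]]; have [G e] := h_lemma GP.
    by exists (J2m (LamLm Y)); rewrite (Phiinv_some G) e.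
- move=> A P Q /Phiinv_spec [C1 [G1 ->]] /Psi_spec [C2 [G2 ->]].
  have [_ _ i1 _] := G1; have [_ _ i2 _] := G2.
  have <- := inv_uniq i1 i2.
  have u := cunit _ _ G1; set c := C1 ord0 ord0.
  have uV : c^-1 \is a GRing.unit by rewrite unitrV.
  exists (c^-1)%:M, c%:M, (c^-1)%:M; split.
  + exact: scalar_diag.
  + exact: scalar_diag.
  + by have := @scalar_inv R n _ uV; rewrite invrK.
  + by exists c%:M; have := @scalar_inv R n _ uV; rewrite invrK.
  + rewrite LamL_cj //; apply/matrixP => j k.
    by rewrite mulmx_scalar_entry mul_scalar_mx !mxE.
Qed.
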